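(* Let $p \geq 3$ be a prime and $x, y \in \mathbb{Z}$ with $x^2 - 2 = y^p$ and $y \neq -1$. Then: (1) if $y \not\equiv -1 \pmod p$, then $x \not\equiv \pm 1 \pmod p$; (2) if $y \equiv -1 \pmod p$, then $x \equiv \pm 1 \pmod{p^2}$, and more precisely $v_p((x-1)(x+1)) = v_p(y+1) + 1$.
   Context: $v_p$ denotes the $p$-adic valuation. *)

(* Defs.v *)
From mathcomp Require Import all_boot all_order all_algebra.
Set Implicit Arguments. Unset Strict Implicit. Unset Printing Implicit Defensive.
Import Order.TTheory GRing.Theory Num.Theory.
Local Open Scope ring_scope.

(* p-adic valuation of an integer: v_p(z) = logn p |z| (v_p(0) := 0, unused here). *)
Definition vp (p : nat) (z : int) : nat := logn p `|z|%N.

(* Main.v *)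
Require Import Defs.
From mathcomp Require Import all_boot all_order all_algebra.
From mathcomp Require Import ring lra zify.
Import Order.TTheory GRing.Theory Num.Theory.
Local Open Scope ring_scope.

Lemma expand_odd (a : int) (h : nat) : exists c : int,
  (1 + a) ^+ (2 * h + 1) =
  1 + (2 * h%:Z + 1) * a + (2 * h%:Z + 1) * h%:Z * a ^+ 2 + a ^+ 3 * c.
Proof.
elim: h => [|h [c IH]].
  by exists 0; rewrite muln0 add0n expr1; ring.
have -> : (2 * h.+1 + 1 = (2 * h + 1).+2)%N by rewrite mulnS; lia.
rewrite !exprS IH.
set n := (2 * h%:Z + 1).
exists (c + 2 * (n * h%:Z) + n + a * (2 * c + n * h%:Z) + a ^+ 2 * c).
have -> : (h.+1)%:Z = h%:Z + 1 by rewrite -addn1 PoszD.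
rewrite /n; ring.
Qed.

Lemma fermat_z (p : nat) (y : int) : prime p -> (y ^+ p = y %[mod p%:Z])%Z.
Proof.
move=> pp.
have p0 : p%:Z != 0 by rewrite eqz_nat; case: p pp.
have [n hn] : exists n : nat, (y %% p%:Z)%Z = n%:Z.
  by exists `|(y %% p%:Z)%Z|%N; rewrite gez0_abs // modz_ge0.
have hn2 : n%:Z = (n%:Z %% p%:Z)%Z by rewrite -hn modz_mod.
rewrite -modzXm hn {2}hn2.
have -> : (n%:Z)^+p = (n ^ p)%N%:Z by rewrite -!natz natrX.
rewrite !modz_nat.
by rewrite (fermat_little n pp).
Qed.

Lemma lte_key (p : nat) (y : int) : prime p -> (3 <= p)%N -> (p%:Z %| y + 1)%Z ->
  exists t : int, y ^+ p + 1 = (y + 1) * p%:Z * (1 + p%:Z * t).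
Proof.
move=> pp p3 /dvdzP [q hq].
have [|op] := even_prime pp; first by move=> e; rewrite e in p3.
have hp : p = (2 * p./2 + 1)%N by rewrite -{1}(odd_double_half p) op addnC -mul2n.
set h := p./2 in hp.
have ey : y = - (1 + (- (q * p%:Z)))  by rewrite -hq; ring.
have [c hc] := expand_odd (- (q * p%:Z)) h.
have hP : p%:Z = 2 * h%:Z + 1 by rewrite {1}hp PoszD PoszM.
exists (- h%:Z * q + q ^+ 2 * c).
rewrite -hp in hc.
rewrite hq {1}ey exprNn -signr_odd op expr1 hc hP.
ring.
Qed.

Theorem theorem2p3 (p : nat) (x y : int) :
  prime p -> (3 <= p)%N -> x ^+ 2 - 2 = y ^+ p -> y != -1 ->
  (~ (y = -1 %[mod p%:Z])%Z ->
     ~ (x = 1 %[mod p%:Z])%Z /\ ~ (x = -1 %[mod p%:Z])%Z) /\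
  ((y = -1 %[mod p%:Z])%Z ->
     ((x = 1 %[mod (p ^ 2)%:Z])%Z \/ (x = -1 %[mod (p ^ 2)%:Z])%Z) /\
     vp p ((x - 1) * (x + 1)) = (vp p (y + 1)).+1).
Proof.
move=> pp p3 E yn1.
have Fy : (p%:Z %| y ^+ p - y)%Z by rewrite -eqz_mod_dvd; apply/eqP; exact: fermat_z.
have X2 : (x - 1) * (x + 1) = y ^+ p + 1 by rewrite -E; ring.
split.
  move=> Hy; split=> Hx; apply: Hy; apply/eqP; rewrite eqz_mod_dvd opprK;
    move/eqP: Hx; rewrite eqz_mod_dvd ?opprK => Hx.
    have : (p%:Z %| (x - 1) * (x + 1))%Z by apply: dvdz_mulr.
    rewrite X2 => H.
    have -> : y + 1 = (y ^+ p + 1) - (y ^+ p - y) by ring.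
    by rewrite rpredB.
  have : (p%:Z %| (x - 1) * (x + 1))%Z by apply: dvdz_mull.
  rewrite X2 => H.
  have -> : y + 1 = (y ^+ p + 1) - (y ^+ p - y) by ring.
  by rewrite rpredB.
move=> Hy; move/eqP: Hy; rewrite eqz_mod_dvd opprK => Hy.
have [t ht] := lte_key _ _ pp p3 Hy.
have y10 : y + 1 != 0 by rewrite -[1]opprK subr_eq0.
have t0 : ~~ (p%:Z %| 1 + p%:Z * t)%Z.
  apply/negP => H.
  have : (p%:Z %| (1 + p%:Z * t) - p%:Z * t)%Z by rewrite rpredB // dvdz_mulr.
  rewrite addrK dvdz1 /= => /eqP e; by rewrite e in p3.
have p0 : p%:Z != 0 by rewrite eqz_nat; case: (p) pp.
have t00 : 1 + p%:Z * t != 0 by apply: contraNneq t0 => ->; exact: dvdz0.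
have Hv : vp p ((x - 1) * (x + 1)) = (vp p (y + 1)).+1.
  rewrite /vp X2 ht !abszM lognM ?muln_gt0 ?absz_gt0 ?p0 ?y10 ?t00 //.
  rewrite lognM ?absz_gt0 ?p0 ?y10 // absz_nat (@logn_prime p p pp) eqxx.
  rewrite (@logn_coprime p `|1 + p%:Z * t|) ?prime_coprime //.
  by rewrite addn0 addn1.
split; last exact: Hv.
have nz : (x - 1) * (x + 1) != 0 by rewrite X2 ht !mulf_neq0.
have H2 : (p ^ 2 %| absz (x - 1)%R * absz (x + 1)%R)%N.
  rewrite -abszM pfactor_dvdn ?absz_gt0 //.
  change (2 <= vp p ((x - 1) * (x + 1)))%N; rewrite Hv ltnS.
  by rewrite /vp -pfactor_dvdn ?absz_gt0 // expn1.
have np2 : ~ ((p%:Z %| x - 1)%Z /\ (p%:Z %| x + 1)%Z).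
  case=> d1 d2.
  have : (p%:Z %| (x + 1) - (x - 1))%Z by rewrite rpredB.
  have -> : (x + 1) - (x - 1) = 2 by ring.
  rewrite dvdzE /= => /dvdn_leq H; have := H isT; lia.
have [d1|nd1] := boolP (p%:Z %| x - 1)%Z.
  left.
  have nd2 : ~~ (p%:Z %| x + 1)%Z by apply/negP => d2; apply: np2.
  apply/eqP; rewrite eqz_mod_dvd dvdzE absz_nat.
  have cop : coprime p (absz (x + 1)%R) by rewrite prime_coprime.
  by rewrite -(Gauss_dvdl (absz (x - 1)%R) (coprimeXl 2 cop)).
right.
apply/eqP; rewrite eqz_mod_dvd opprK dvdzE absz_nat.
have cop : coprime p (absz (x - 1)%R) by rewrite prime_coprime.
by rewrite -(Gauss_dvdr (absz (x + 1)%R) (coprimeXl 2 cop)).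
Qed.
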